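(* Let $A$ be a valuation domain in which every non-zero prime ideal is branched, and let $E$ be an $A$-module. The following are equivalent: (1) $aE=a^2E$ for each $a\in A$; (2) for each prime ideal $L$ of $A$, $LE/L'E$ is a divisible $A/L'$-module, where $L'$ denotes the union of all prime ideals properly contained in $L$.
   Context: In a valuation domain, a non-zero prime ideal $L$ is branched if it is not the union of the prime ideals properly contained in it. An $A/L'$-module $M$ is divisible if $sM=M$ for every $s\in A\setminus L'$. *)

(* Defs.v *)
From HB Require Import structures.
From mathcomp Require Import all_boot all_order all_algebra.
Set Implicit Arguments. Unset Strict Implicit. Unset Printing Implicit Defensive.
Import Order.TTheory GRing.Theory.
Local Open Scope ring_scope.

Definition valuation_domain (A : idomainType) : Prop :=
  forall a b : A, (exists c, b = a * c) \/ (exists c, a = b * c).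

Definition is_ideal (A : comNzRingType) (I : A -> Prop) : Prop :=
  [/\ I 0, (forall x y, I x -> I y -> I (x + y)) & (forall a x, I x -> I (a * x))].

Definition prime_ideal (A : comNzRingType) (P : A -> Prop) : Prop :=
  [/\ is_ideal P, ~ P 1 & (forall a b, P (a * b) -> P a \/ P b)].

Definition proper_sub (A : Type) (P L : A -> Prop) : Prop :=
  (forall x, P x -> L x) /\ exists x, L x /\ ~ P x.

Definition lower_prime (A : comNzRingType) (L : A -> Prop) : A -> Prop :=
  fun x => exists P, prime_ideal P /\ proper_sub P L /\ P x.

Definition branched (A : comNzRingType) (L : A -> Prop) : Prop :=
  exists x, L x /\ ~ lower_prime L x.

Definition nonzero_ideal (A : comNzRingType) (L : A -> Prop) : Prop :=
  exists x, L x /\ x <> 0.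

Definition ideal_mul (A : comNzRingType) (E : lmodType A) (I : A -> Prop) : E -> Prop :=
  fun m => exists n (l : 'I_n -> A) (x : 'I_n -> E),
    (forall i, I (l i)) /\ m = \sum_(i < n) l i *: x i.

Definition scal_img (A : comNzRingType) (E : lmodType A) (a : A) : E -> Prop :=
  fun m => exists y, m = a *: y.

(* The A/L'-module LE/L'E is divisible: s (LE/L'E) = LE/L'E for every
   s in A \ L', i.e. every m in LE is congruent modulo L'E to s *: m'
   for some m' in LE. *)
Definition quotient_divisible (A : comNzRingType) (E : lmodType A) (L : A -> Prop) : Prop :=
  forall s : A, ~ lower_prime L s ->
    forall m, @ideal_mul A E L m ->
      exists m', @ideal_mul A E L m' /\ @ideal_mul A E (lower_prime L) (m - s *: m').

(* Main.v *)
Require Import Defs.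
From HB Require Import structures.
From mathcomp Require Import all_boot all_order all_algebra.
From mathcomp Require Import ring.
From Stdlib Require Import Classical.
Import Order.TTheory GRing.Theory.
Local Open Scope ring_scope.

Section Aux.
Set Implicit Arguments. Unset Strict Implicit.
Variable A : idomainType.
Hypothesis vd : valuation_domain A.

Definition rad (a : A) : A -> Prop := fun x => exists k, exists c, x ^+ k = a * c.

Lemma rad_ideal a : is_ideal (rad a).
Proof.
split.
- by exists 1%N, 0; rewrite expr1 mulr0.
- move=> x y [k [c Hc]] [j [d Hd]].
  case: (vd x y) => [[e ->]|[e ->]].
  + exists k, (c * (1 + e) ^+ k).
    by rewrite -{1}[x]mulr1 -mulrDr exprMn Hc mulrA.
  + exists j, (d * (e + 1) ^+ j).
    by rewrite -{2}[y]mulr1 -mulrDr exprMn Hd mulrA.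
- move=> r x [k [c Hc]]; exists k, (c * r ^+ k).
  by rewrite exprMn mulrC Hc mulrA.
Qed.

Lemma rad_mulP a x y : rad a (x * y) -> rad a x \/ rad a y.
Proof.
move=> [k [c Hc]].
case: (vd x y) => [[e He]|[e He]].
- right; exists (k + k)%N, (c * e ^+ k).
  have -> : y ^+ (k + k) = (x * y) ^+ k * e ^+ k by rewrite He exprD !exprMn; ring.
  by rewrite Hc mulrA.
- left; exists (k + k)%N, (c * e ^+ k).
  have -> : x ^+ (k + k) = (x * y) ^+ k * e ^+ k by rewrite He exprD !exprMn; ring.
  by rewrite Hc mulrA.
Qed.

Lemma prime_pow (L : A -> Prop) x k : prime_ideal L -> L (x ^+ k) -> L x.
Proof.
case=> _ H1 Hm; elim: k => [|k IH]; first by rewrite expr0.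
by rewrite exprS => /Hm [].
Qed.

Lemma rad_sub (L : A -> Prop) a x : prime_ideal L -> L a -> rad a x -> L x.
Proof.
move=> PL La [k [c Hc]]; apply: (@prime_pow L x k PL); rewrite Hc mulrC.
by case: PL => [[_ _ Hi] _ _]; apply: Hi.
Qed.

Lemma rad_self a : rad a a.
Proof. by exists 1%N, 1; rewrite expr1 mulr1. Qed.

Lemma rad_prime a : ~ (exists c, 1 = a * c) -> prime_ideal (rad a).
Proof.
move=> Hn; split; first exact: rad_ideal.
- by move=> [k [c Hc]]; apply: Hn; exists c; rewrite -Hc expr1n.
- exact: rad_mulP.
Qed.

Lemma key (L : A -> Prop) s x : prime_ideal L -> L s -> ~ lower_prime L s ->
  L x -> rad s x.
Proof.
move=> PL Ls Hs Lx; apply: NNPP => Hx; apply: Hs.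
exists (rad s); split.
  apply: rad_prime => -[c Hc]; case: PL => [[_ _ Hi] H1 _]; apply: H1.
  by rewrite Hc mulrC; apply: Hi.
split; last exact: rad_self.
split; first by move=> y; apply: rad_sub.
by exists x.
Qed.

Lemma ideal_mul_scal (E : lmodType A) (I : A -> Prop) b (m : E) :
  (forall p, I p -> exists d, p = b * d) -> @ideal_mul A E I m -> @scal_img A E b m.
Proof.
move=> HI [n [l [x [Hl ->]]]].
have [d Hd] := fin_all_exists (fun i => HI _ (Hl i)).
exists (\sum_(i < n) d i *: x i); rewrite scaler_sumr; apply: eq_bigr => i _.
by rewrite Hd scalerA.
Qed.

End Aux.

Theorem proposition2p6 (A : idomainType) (E : lmodType A) :
  valuation_domain A ->
  (forall L : A -> Prop, prime_ideal L -> nonzero_ideal L -> branched L) ->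
  ((forall (a : A) (m : E), @scal_img A E a m <-> @scal_img A E (a ^+ 2) m) <->
   (forall L : A -> Prop, prime_ideal L -> @quotient_divisible A E L)).
Proof.
move=> vd _; split.
- move=> H1.
  have Hpow : forall (a : A) (k : nat) (y : E), exists z, a *: y = a ^+ k.+1 *: z.
    move=> a k; elim: k => [|k IH] y; first by exists y; rewrite expr1.
    have [y' Hy'] := (H1 a (a *: y)).1 (ex_intro _ y erefl).
    have [z Hz] := IH y'.
    by exists z; rewrite Hy' expr2 -scalerA Hz scalerA -exprS.
  move=> L PL s Hs m [n [l [x [Hl ->]]]].
  have term : forall i, exists cz : A * E, L cz.1 /\ l i *: x i = s *: (cz.1 *: cz.2).
    move=> i; have Li := Hl i.
    case: (classic (L s)) => Ls.
    + have [k [c Hc]] := key vd PL Ls Hs Li.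
      have [z Hz] := Hpow (l i) k (x i).
      exists (c * l i, z); split.
        by case: PL => [[_ _ Hi] _ _]; apply: Hi.
      by rewrite Hz /= scalerA exprSr Hc mulrA.
    + case: (vd s (l i)) => [[e He]|[e He]].
      * exists (e, x i); split; last by rewrite He /= scalerA.
        case: PL => [_ _ Hm]; have := Hl i; rewrite He => /Hm [] //.
      * exfalso; apply: Ls; rewrite He mulrC.
        by case: PL => [[_ _ Hi] _ _]; apply: Hi.
  have [cz Hcz] := fin_all_exists term.
  exists (\sum_(i < n) (cz i).1 *: (cz i).2); split.
    by exists n, (fun i => (cz i).1), (fun i => (cz i).2); split => // i; case: (Hcz i).
  have -> : \sum_(i < n) l i *: x i - s *: \sum_(i < n) (cz i).1 *: (cz i).2 = 0.
    rewrite scaler_sumr -sumrB big1 // => i _.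
    by case: (Hcz i) => _ ->; rewrite subrr.
  exists 0%N, (fun i => 0), (fun i => 0); split; first by case.
  by rewrite big_ord0.
- move=> H2 a m; split; last first.
    by move=> [z ->]; exists (a *: z); rewrite scalerA expr2.
  move=> [y ->].
  case: (classic (exists c, 1 = a * c)) => [[c Hc]|Hn].
    exists ((c * c) *: (a *: y)); rewrite (scalerA (a ^+ 2)).
    have -> : a ^+ 2 * (c * c) = (a * c) * (a * c) by rewrite expr2; ring.
    by rewrite -Hc mulr1 scale1r.
  have PL := rad_prime vd Hn.
  have Hs : ~ lower_prime (rad a) a.
    move=> [P [PP [[Hsub [x [Lx Px]]] Pa]]].
    by apply: Px; apply: (rad_sub PP Pa Lx).
  have La2 : forall p, lower_prime (rad a) p -> exists d, p = a ^+ 2 * d.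
    move=> p [P [PP [[Hsub [x [Lx Px]]] Pp]]].
    have nPa : ~ P a by move=> Pa; apply: Px; apply: (rad_sub PP Pa Lx).
    case: PP => [[_ _ Hi] _ Hm].
    case: (vd a p) => [[c Hc]|[c Hc]]; last first.
      by exfalso; apply: nPa; rewrite Hc mulrC; apply: Hi.
    have Pc : P c by move: Pp; rewrite Hc => /Hm [].
    case: (vd a c) => [[d Hd]|[d Hd]]; last first.
      by exfalso; apply: nPa; rewrite Hd mulrC; apply: Hi.
    by exists d; rewrite Hc Hd expr2 mulrA.
  have Hdiv := H2 _ PL a Hs.
  have Lay : ideal_mul (rad a) (a *: y).
    exists 1%N, (fun _ => a), (fun _ => y); split; first by move=> _; apply: rad_self.
    by rewrite big_ord1.
  have [m' [Lm' Hn1]] := Hdiv _ Lay.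
  have [m'' [_ Hn2]] := Hdiv _ Lm'.
  have [w Hw] := ideal_mul_scal La2 Hn1.
  have [w' Hw'] := ideal_mul_scal La2 Hn2.
  exists (m'' + a *: w' + w).
  have e1 : a *: y = a *: m' + a ^+ 2 *: w by rewrite -Hw addrC subrK.
  have e2 : m' = a *: m'' + a ^+ 2 *: w' by rewrite -Hw' addrC subrK.
  rewrite e1 e2 !scalerDr !scalerA -expr2.
  by rewrite (mulrC a (a ^+ 2)).
Qed.
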